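(* Let $N$ be the Iwasawa N-group of a real simple Lie group of real rank one, i.e. $N$ is one of: the abelian Lie group $\mathbb{R}^n$, a $(2n+1)$-dimensional Heisenberg group, a $(4n+3)$-dimensional quaternionic Heisenberg group, or the $15$-dimensional octonionic Heisenberg group. Then $N$ satisfies the partial automatic continuity. More precisely, for every abstract (not necessarily continuous) group automorphism $F$ of $N$ there exist a central automorphism $\mu$ of $N$ and a Lie group automorphism $\overline{F}$ of $N$ such that $F=\mu\circ\overline{F}$.
   Context: For a real simple Lie group $G$ with Iwasawa decomposition $G=KAN$, the simply connected nilpotent group $N$ is its Iwasawa N-group. A central automorphism of $N$ is an abstract group automorphism $F$ with $x^{-1}F(x)$ in the center of $N$ for all $x\in N$; a Lie group automorphism is a continuous (hence smooth) group automorphism. Field automorphisms of a simply connected nilpotent Lie group $N$ with Lie algebra $\mathcal{N}$: if $\mathcal{N}=\mathcal{N}_1\oplus\cdots\oplus\mathcal{N}_k$ is a direct sum of ideals, for each $\mathcal{N}_i$ that is the realification of a complex Lie algebra choose a $\mathbb{C}$-basis $e_1,\dots,e_m$ and a field automorphism $\varphi$ of $\mathbb{C}$ fixing the structure constants and let $\sigma_i(\sum x_le_l)=\sum\varphi(x_l)e_l$, otherwise $\sigma_i=\mathrm{id}$; then $\exp\circ(\sigma_1\times\cdots\times\sigma_k)\circ\exp^{-1}$ is a field automorphism. $N$ satisfies the partial automatic continuity if every abstract group automorphism has the form $\mu\circ\overline{F}\circ\Phi$ with $\mu$ central, $\overline{F}$ a Lie group automorphism, $\Phi$ a field automorphism.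 *)

(* Defs.v *)
From HB Require Import structures.
From mathcomp Require Import all_boot all_order all_algebra.
From mathcomp Require Import all_classical all_reals all_analysis.
Set Implicit Arguments. Unset Strict Implicit. Unset Printing Implicit Defensive.
Import Order.TTheory GRing.Theory Num.Theory.
Import numFieldNormedType.Exports.
Local Open Scope ring_scope.

Section GroupNotions.
Variable T : Type.
Variables (mul : T -> T -> T) (inv : T -> T).

Definition group_aut (F : T -> T) : Prop :=
  bijective F /\ forall x y, F (mul x y) = mul (F x) (F y).

Definition in_center (c : T) : Prop := forall y, mul c y = mul y c.

Definition central_aut (F : T -> T) : Prop :=
  group_aut F /\ forall x, in_center (mul (inv x) (F x)).
End GroupNotions.

Definition lie_aut (T : topologicalType) (mul : T -> T -> T) (F : T -> T) : Prop :=
  group_aut mul F /\ continuous F.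

Definition aut_central_times_lie (T : topologicalType)
    (mul : T -> T -> T) (inv : T -> T) : Prop :=
  forall F : T -> T, group_aut mul F ->
    exists mu Fbar : T -> T,
      central_aut mul inv mu /\ lie_aut mul Fbar /\ F = mu \o Fbar.

(* For a Lie algebra V (+) Z with [v,w] = b v w (b skew, values in the
   center Z), the group law in exponential coordinates (BCH) is
   (v,z)(v',z') = (v+v', z+z'+ 1/2 b(v,v')). *)
Section Nil2.
Variable R : realType.
Variables (V Z : lmodType R) (b : V -> V -> Z).
Definition nil2_mul (x y : V * Z) : V * Z :=
  (x.1 + y.1, x.2 + y.2 + 2^-1 *: b x.1 y.1).
Definition nil2_inv (x : V * Z) : V * Z := (- x.1, - x.2).
End Nil2.

Section Brackets.
Variable R : realType.

Definition imag k (p : 'rV[R]_k.+1) : 'rV[R]_k := \row_(j < k) p 0 (lift ord0 j).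

(* quaternions as 'rV_4 = a0 + a1 i + a2 j + a3 k *)
Definition qc (p : 'rV[R]_4) (k : nat) : R := p 0 (inord k).
Definition qmul (p q : 'rV[R]_4) : 'rV[R]_4 :=
  \row_(j < 4) [:: qc p 0 * qc q 0 - qc p 1 * qc q 1 - qc p 2 * qc q 2 - qc p 3 * qc q 3;
                   qc p 0 * qc q 1 + qc p 1 * qc q 0 + qc p 2 * qc q 3 - qc p 3 * qc q 2;
                   qc p 0 * qc q 2 - qc p 1 * qc q 3 + qc p 2 * qc q 0 + qc p 3 * qc q 1;
                   qc p 0 * qc q 3 + qc p 1 * qc q 2 - qc p 2 * qc q 1 + qc p 3 * qc q 0]`_j.
Definition qconj (p : 'rV[R]_4) : 'rV[R]_4 :=
  \row_(j < 4) (if (j == 0 :> nat) then p 0 j else - p 0 j).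

(* octonions as 'rV_8 = pairs (a,b) of quaternions, Cayley--Dickson:
   (a,b)(c,d) = (ac - conj(d) b, da + b conj(c)), conj(a,b) = (conj a, -b) *)
Definition ofst (x : 'rV[R]_8) : 'rV[R]_4 := \row_(j < 4) x 0 (inord j).
Definition osnd (x : 'rV[R]_8) : 'rV[R]_4 := \row_(j < 4) x 0 (inord (j + 4)).
Definition omk (a b : 'rV[R]_4) : 'rV[R]_8 :=
  \row_(j < 8) (if (j < 4)%N then a 0 (inord j) else b 0 (inord (j - 4))).
Definition omul (x y : 'rV[R]_8) : 'rV[R]_8 :=
  omk (qmul (ofst x) (ofst y) - qmul (qconj (osnd y)) (osnd x))
      (qmul (osnd y) (ofst x) + qmul (osnd x) (qconj (ofst y))).
Definition oconj (x : 'rV[R]_8) : 'rV[R]_8 := omk (qconj (ofst x)) (- osnd x).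

Definition bracket_abelian n (v w : 'rV[R]_n) : 'rV[R]_0 := 0.
(* Heisenberg, V = R^{2n} = 'M_(n,2) (rows (x_i,y_i)), Z = R *)
Definition bracket_heis n (v w : 'M[R]_(n, 2)) : 'rV[R]_1 :=
  \row_(j < 1) \sum_(i < n) (v i ord0 * w i ord_max - v i ord_max * w i ord0).
(* quaternionic Heisenberg, V = H^n = 'M_(n,4), Z = Im H = R^3 *)
Definition bracket_qheis n (v w : 'M[R]_(n, 4)) : 'rV[R]_3 :=
  imag (\sum_(i < n) qmul (qconj (row i v)) (row i w)).
(* octonionic Heisenberg, V = O = R^8, Z = Im O = R^7 *)
Definition bracket_oheis (v w : 'rV[R]_8) : 'rV[R]_7 := imag (omul (oconj v) w).
End Brackets.

Notation N_abelian R n := ('rV[R]_n * 'rV[R]_0)%type.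
Notation N_heis R n := ('M[R]_(n, 2) * 'rV[R]_1)%type.
Notation N_qheis R n := ('M[R]_(n, 4) * 'rV[R]_3)%type.
Notation N_oheis R := ('rV[R]_8 * 'rV[R]_7)%type.

Definition mul_abelian (R : realType) n : N_abelian R n -> N_abelian R n -> N_abelian R n :=
  nil2_mul (@bracket_abelian R n).
Definition inv_abelian (R : realType) n : N_abelian R n -> N_abelian R n := @nil2_inv R _ _.
Definition mul_heis (R : realType) n : N_heis R n -> N_heis R n -> N_heis R n :=
  nil2_mul (@bracket_heis R n).
Definition inv_heis (R : realType) n : N_heis R n -> N_heis R n := @nil2_inv R _ _.
Definition mul_qheis (R : realType) n : N_qheis R n -> N_qheis R n -> N_qheis R n :=
  nil2_mul (@bracket_qheis R n).
Definition inv_qheis (R : realType) n : N_qheis R n -> N_qheis R n := @nil2_inv R _ _.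
Definition mul_oheis (R : realType) : N_oheis R -> N_oheis R -> N_oheis R :=
  nil2_mul (@bracket_oheis R).
Definition inv_oheis (R : realType) : N_oheis R -> N_oheis R := @nil2_inv R _ _.

(* Main.v *)
Require Import Defs.
From HB Require Import structures.
From mathcomp Require Import all_boot all_order all_algebra.
From mathcomp Require Import all_classical all_reals all_analysis.
Import numFieldNormedType.Exports.
Local Open Scope ring_scope.
From mathcomp Require Import ring lra.
Set Implicit Arguments. Unset Strict Implicit. Unset Printing Implicit Defensive.
Import Order.TTheory GRing.Theory Num.Theory.
Local Open Scope ring_scope.


Lemma cont_sum (R : realType) (T : topologicalType) (V : normedModType R)
  (I : Type) (r : seq I) (g : I -> T -> V) :
  (forall i, continuous (g i)) -> continuous (fun x => \sum_(i <- r) g i x).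
Proof.
move=> hg; elim: r => [|i r IH] x.
  under eq_fun do rewrite big_nil; exact: cvg_cst.
under eq_fun do rewrite big_cons.
exact: (continuousD (hg i x) (IH x)).
Qed.

Lemma lin_cont (R : realType) m n p q (f : 'M[R]_(m,n) -> 'M[R]_(p,q)) :
  (forall a x y, f (a *: x + y) = a *: f x + f y) -> continuous f.
Proof.
move=> fl.
have f0 : f 0 = 0.
  by have := fl 1 0 0; rewrite scaler0 !addr0 scale1r => /eqP; rewrite -subr_eq subrr eq_sym => /eqP.
have fD x y : f (x + y) = f x + f y by rewrite -(scale1r x) fl !scale1r.
have fZ a x : f (a *: x) = a *: f x by rewrite -(addr0 (a *: x)) fl f0 addr0.
have fS (I : Type) (r : seq I) (g : I -> 'M[R]_(m,n)) : f (\sum_(i <- r) g i) = \sum_(i <- r) f (g i).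
  by elim: r => [|i r IH]; rewrite ?big_nil ?f0 // !big_cons fD IH.
have -> : f = fun x => \sum_(i < m) \sum_(j < n) x i j *: f (delta_mx i j).
  apply: funext => x; rewrite {1}(matrix_sum_delta x) fS.
  by apply: eq_bigr => i _; rewrite fS; apply: eq_bigr => j _; rewrite fZ.
apply: cont_sum => i; apply: cont_sum => j x.
apply: continuousZr_tmp; exact: coord_continuous.
Qed.

Lemma cont_prod (T1 T2 : topologicalType) (f : T1 -> T1) (g : T2 -> T2) :
  continuous f -> continuous g -> continuous (fun x : T1 * T2 => (f x.1, g x.2)).
Proof.
move=> hf hg x; apply: cvg_pair.
  by apply: (continuous_comp (f := fst)); [exact: cvg_fst | exact: hf].
by apply: (continuous_comp (f := snd)); [exact: cvg_snd | exact: hg].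
Qed.

Lemma scal_uniq (R : realType) (W : lmodType R) (s s' : R) (x : W) :
  x != 0 -> s *: x = s' *: x -> s = s'.
Proof.
by move=> x0 /eqP; rewrite -subr_eq0 -scalerBl scaler_eq0 (negbTE x0) orbF subr_eq0 => /eqP.
Qed.

Lemma halfZ (R : realType) (W : lmodType R) (X : W) : X = 2^-1 *: X + 2^-1 *: X.
Proof. rewrite -scalerDl; have -> : (2^-1 + 2^-1 : R) = 1 by rewrite [RHS](@splitr R 1) mul1r. by rewrite scale1r. Qed.
Section Sig.
Variable R : rcfType.
Variable s : R -> R.
Hypothesis sD : forall x y, s (x + y) = s x + s y.
Hypothesis sM : forall x y, s (x * y) = s x * s y.
Hypothesis s1 : s 1 = 1.

Lemma s0 : s 0 = 0.
Proof. by have := sD 0 0; rewrite addr0 => /eqP; rewrite -subr_eq subrr eq_sym => /eqP. Qed.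
Lemma sN x : s (- x) = - s x.
Proof. by apply/eqP; rewrite -subr_eq0 opprK -sD addNr s0. Qed.
Lemma sn (n : nat) : s n%:R = n%:R.
Proof. by elim: n => [|n IH]; rewrite ?s0 // -addn1 !natrD sD IH s1. Qed.
Lemma sz (m : int) : s m%:~R = m%:~R.
Proof. by case: m => n; rewrite ?NegzE ?mulrNz ?sN sn. Qed.
Lemma sge0 x : 0 <= x -> 0 <= s x.
Proof. move=> x0; rewrite -(sqr_sqrtr x0) sM; exact: mulr_ge0_le0 || by rewrite -expr2 sqr_ge0. Qed.
Lemma smono x y : x <= y -> s x <= s y.
Proof. by move=> le; rewrite -subr_ge0 -sN -sD; apply: sge0; rewrite subr_ge0. Qed.
End Sig.
Lemma sig_id (R : realType) (s : R -> R) :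
  (forall x y, s (x + y) = s x + s y) -> (forall x y, s (x * y) = s x * s y) ->
  s 1 = 1 -> forall x, s x = x.
Proof.
move=> sD sM s1 x; apply/eqP; apply/negPn/negP => ne.
have d0 : 0 < `|s x - x| by rewrite normr_gt0 subr_eq0.
set k := (Num.truncn (`|s x - x|^-1)).+1.
have kd : 1 < k%:R * `|s x - x|.
  rewrite -ltr_pdivrMr ?d0 // div1r.
  have hi : 0 <= `|s x - x|^-1 by rewrite invr_ge0 ltW.
  by have /andP[_ ->] := truncn_itv hi.
set m := Num.floor (k%:R * x).
have h1 := floor_le (k%:R * x); have h2 := floorD1_gt (k%:R * x).
have h3 : m%:~R <= k%:R * s x.
  by rewrite -(sz sD s1) -(sn sD s1) -sM; apply: (smono sD sM); exact: h1.
have h4 : k%:R * s x <= (m+1)%:~R.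
  by rewrite -(sz sD s1) -(sn sD s1) -sM; apply: (smono sD sM); exact: ltW h2.
rewrite -/m in h1 h2.
move: kd; rewrite -normr_nat -normrM mulrBr.
rewrite intrD in h2 h4.
rewrite ltNge; apply/negP/negPn.
rewrite ler_norml; apply/andP; split; lra.
Qed.

Section Generic.
Variable R : realType.
Variables m1 n1 m2 n2 : nat.
Local Notation V := 'M[R]_(m1,n1).
Local Notation Z := 'M[R]_(m2,n2).
Variable b : V -> V -> Z.
Hypothesis bl : forall a u v w, b (a *: u + v) w = a *: b u w + b v w.
Hypothesis bskew : forall v w, b w v = - b v w.
Hypothesis bnd : forall v, v != 0 -> exists w, b v w != 0.
Hypothesis bDl : forall u v, v != 0 -> (forall w, b v w = 0 -> b u w = 0) -> exists t, u = t *: v.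
Hypothesis bs : forall z, exists v w, z = b v w.

Lemma b0l w : b 0 w = 0.
Proof. by have := bl 1 0 0 w; rewrite scaler0 !addr0 scale1r => /eqP; rewrite -subr_eq subrr eq_sym => /eqP. Qed.
Lemma b0r v : b v 0 = 0.
Proof. by rewrite bskew b0l oppr0. Qed.
Lemma bDlft u v w : b (u + v) w = b u w + b v w.
Proof. by rewrite -(scale1r u) bl !scale1r. Qed.
Lemma bZl a u w : b (a *: u) w = a *: b u w.
Proof. by rewrite -(addr0 (a *: u)) bl b0l addr0. Qed.
Lemma bZr a u w : b u (a *: w) = a *: b u w.
Proof. by rewrite bskew bZl -scalerN -bskew. Qed.

Theorem generic : aut_central_times_lie (nil2_mul b) (@nil2_inv R V Z).
Proof.
move=> F [[G FG GF] Fm].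
have cent0 z y : nil2_mul b (0,z) y = nil2_mul b y (0,z).
  by rewrite /nil2_mul /= b0l b0r scaler0 !addr0 add0r addrC.
have centv x : (forall y, nil2_mul b x y = nil2_mul b y x) -> x.1 = 0.
  move=> h; apply/eqP; apply/negPn/negP => /bnd [w]; apply/negP/negPn/eqP.
  move: (congr1 snd (h (w, 0))); rewrite /nil2_mul /= addr0 add0r bskew scalerN.
  by move/addrI/eqP; rewrite eq_sym -addr_eq0 -halfZ => /eqP ->; rewrite oppr0.
have Fc x : (forall y, nil2_mul b x y = nil2_mul b y x) ->
    forall y, nil2_mul b (F x) y = nil2_mul b y (F x).
  by move=> h y; rewrite -(GF y) -!Fm h.
have Fci x : (forall y, nil2_mul b (F x) y = nil2_mul b y (F x)) ->
    forall y, nil2_mul b x y = nil2_mul b y x.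
  by move=> h y; apply: (can_inj FG); rewrite !Fm h.
have [A AE] : exists A : V -> V, forall v, A v = (F (v,0)).1 by exists (fun v => (F (v,0)).1).
have [phi phiE] : exists phi : Z -> Z, forall z, phi z = (F (0,z)).2 by exists (fun z => (F (0,z)).2).
have F0z z : F (0,z) = (0, phi z).
  rewrite phiE; case E: (F (0,z)) => [a c] /=; congr (_,_).
  by have := centv _ (Fc _ (cent0 z)); rewrite E.
have Fx1 x : (F x).1 = A x.1.
  case: x => a c /=.
  have -> : (a,c) = nil2_mul b (a,0) (0,c) by rewrite /nil2_mul /= b0r scaler0 !addr0 add0r.
  by rewrite Fm F0z /= addr0 AE.
have AD v w : A (v + w) = A v + A w.
  by move: (congr1 fst (Fm (v,0) (w,0))); rewrite Fx1 /= -!AE.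
have phiD z z' : phi (z + z') = phi z + phi z'.
  have e : (0, z + z') = nil2_mul b (0,z) (0,z').
    by rewrite /nil2_mul /= b0l scaler0 !addr0.
  by move: (congr1 snd (Fm (0,z) (0,z'))); rewrite -e !F0z /= b0l scaler0 addr0.
have A0 : A 0 = 0.
  by have := AD 0 0; rewrite addr0 => /eqP; rewrite -subr_eq subrr eq_sym => /eqP.
have phi0 : phi 0 = 0.
  by have := phiD 0 0; rewrite addr0 => /eqP; rewrite -subr_eq subrr eq_sym => /eqP.
have key v w : phi (b v w) = b (A v) (A w).
  have e : nil2_mul b (v,0) (w,0) = nil2_mul b (nil2_mul b (w,0) (v,0)) (0, b v w).
    rewrite /nil2_mul /= b0r scaler0 !addr0 !add0r; congr (_,_); first by rewrite addrC.
    by rewrite [b w v]bskew scalerN [X in _ = _ + X](halfZ (b v w)) addrA addNr add0r.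
  move: (congr1 snd (congr1 F e)); rewrite !Fm F0z.
  case E1: (F (v,0)) => [a1 c1]; case E2: (F (w,0)) => [a2 c2] /=.
  have -> : A v = a1 by rewrite AE E1.
  have -> : A w = a2 by rewrite AE E2.
  rewrite b0r scaler0 addr0 [b a2 a1]bskew scalerN (addrC c2 c1) -[RHS]addrA.
  by move/addrI/eqP; rewrite addrC -subr_eq opprK -halfZ eq_sym => /eqP.
have Asurj v' : A (G (v',0)).1 = v' by rewrite -Fx1 GF.
have Ainj0 v : A v = 0 -> v = 0.
  move=> h; apply: (centv (v,0)); apply: Fci => y.
  case E: (F (v,0)) => [a c]; have -> : a = 0 by rewrite -h AE E.
  exact: cent0.
have phiinj z : phi z = 0 -> z = 0.
  move=> h; have : F (0,z) = F (0,0) by rewrite !F0z h phi0.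
  by move/(can_inj FG)/(congr1 snd).
have Gc z : (G (0,z)).1 = 0.
  by apply: centv; apply: Fci; rewrite GF; exact: cent0.
have phisurj z : phi (G (0,z)).2 = z.
  have := GF (0,z); case E: (G (0,z)) => [a c] /=.
  have -> : a = 0 by have := Gc z; rewrite E.
  by rewrite F0z => /(congr1 snd).
have lines v : v != 0 -> forall t, exists s, A (t *: v) = s *: A v.
  move=> v0 t; apply: bDl.
    by apply/negP => /eqP /Ainj0 /eqP; apply/negP.
  move=> w' h; rewrite -(Asurj w') -key; rewrite -(Asurj w') -key in h.
  by rewrite bZl (phiinj _ h) scaler0 phi0.
have Alin t v : A (t *: v) = t *: A v.
  have [->|v0] := eqVneq v 0; first by rewrite scaler0 A0 scaler0.
  have [w bw] := bnd v0.
  have w0 : w != 0 by apply: contraNneq bw => ->; rewrite b0r.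
  have Av0 : A v != 0 by apply/negP => /eqP /Ainj0 /eqP; apply/negP.
  have beta0 : b (A v) (A w) != 0.
    by rewrite -key; apply/negP => /eqP /phiinj /eqP; apply/negP.
  have [sg Hs] := choice (lines v v0).
  have [tau Ht] := choice (lines w w0).
  have sg1 : sg 1 = 1.
    by apply: (scal_uniq Av0); rewrite -Hs !scale1r.
  have sgM a c : sg (a * c) = sg a * tau c.
    apply: (scal_uniq beta0).
    rewrite -bZl -Hs -key bZl -scalerA -bZr -bZl key Hs Ht bZl bZr scalerA.
    by [].
  have tauE c : tau c = sg c by rewrite -[c]mul1r sgM sg1 mul1r mul1r.
  have sgD a c : sg (a + c) = sg a + sg c.
    by apply: (scal_uniq Av0); rewrite scalerDl -!Hs -AD -scalerDl.
  rewrite Hs (sig_id sgD _ sg1) // => x y; by rewrite sgM tauE.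
have philin t z : phi (t *: z) = t *: phi z.
  by have [v [w ->]] := bs z; rewrite -bZl !key Alin bZl.
have Ainj x y : A x = A y -> x = y.
  move=> h; apply/eqP; rewrite -subr_eq0; apply/eqP/Ainj0.
  by rewrite -scaleN1r AD Alin h scaleN1r subrr.
have phiinj' x y : phi x = phi y -> x = y.
  move=> h; apply/eqP; rewrite -subr_eq0; apply/eqP/phiinj.
  by rewrite -scaleN1r phiD philin h scaleN1r subrr.
pose Fb := fun x : V * Z => (A x.1, phi x.2).
pose Fbi := fun x : V * Z => ((G (x.1,0)).1, (G (0,x.2)).2).
have FbK : cancel Fb Fbi.
  by case=> a c; rewrite /Fb /Fbi /=; congr (_,_); [apply: Ainj | apply: phiinj'];
    rewrite ?Asurj ?phisurj.
have FbiK : cancel Fbi Fb.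
  by case=> a c; rewrite /Fb /Fbi /= Asurj phisurj.
have Fbm x y : Fb (nil2_mul b x y) = nil2_mul b (Fb x) (Fb y).
  by rewrite /Fb /nil2_mul /= AD !phiD philin key.
have Fbim x y : Fbi (nil2_mul b x y) = nil2_mul b (Fbi x) (Fbi y).
  by rewrite -{1}(FbiK x) -{1}(FbiK y) -Fbm FbK.
exists (F \o Fbi), Fb; split; last split.
- split.
    split; first exists (Fb \o G).
      by move=> x /=; rewrite FG FbiK.
      by move=> x /=; rewrite FbK GF.
    by move=> x y /=; rewrite Fbim Fm.
  move=> x y.
  have -> : nil2_mul b (nil2_inv x) ((F \o Fbi) x) = (0, (nil2_mul b (nil2_inv x) ((F \o Fbi) x)).2).
    by rewrite /nil2_mul /nil2_inv /= Fx1 /Fbi /= Asurj addNr.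
  exact: cent0.
- split; first split.
    by exists Fbi.
    exact: Fbm.
  apply: cont_prod; apply: lin_cont => a x y.
    by rewrite AD Alin.
  by rewrite phiD philin.
- by apply: funext => x /=; rewrite FbK.
Qed.
End Generic.

Lemma xNx (R : realType) (W : lmodType R) (x : W) : x = - x -> x = 0.
Proof. by move=> h; rewrite (halfZ x) {2}h scalerN addrN. Qed.


Section Rank1.
Variable R : realType.
Variables m n : nat.
Local Notation V := 'M[R]_(m,n).
Variable b : V -> V -> 'rV[R]_1.
Hypothesis bl : forall a u v w, b (a *: u + v) w = a *: b u w + b v w.
Hypothesis bskew : forall v w, b w v = - b v w.
Variable I : finType.
Variable e : I -> V.
Hypothesis he : forall x, (forall p, b x (e p) 0 0 = 0) -> x = 0.

Let om x y := b x y 0 0.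
Lemma b0l1 w : b 0 w = 0.
Proof. by have := bl 1 0 0 w; rewrite scaler0 !addr0 scale1r => /eqP; rewrite -subr_eq subrr eq_sym => /eqP. Qed.
Lemma b0r1 v : b v 0 = 0.
Proof. by rewrite bskew b0l1 oppr0. Qed.
Lemma om_l a u v w : om (a *: u + v) w = a * om u w + om v w.
Proof. by rewrite /om bl !mxE. Qed.
Lemma om_r a u v w : om w (a *: u + v) = a * om w u + om w v.
Proof. by rewrite /om bskew bl [b u w]bskew [b v w]bskew !mxE; ring. Qed.
Lemma r1_eq (x y : 'rV[R]_1) : x 0 0 = y 0 0 -> x = y.
Proof. by move=> h; apply/rowP => j; rewrite ord1. Qed.

Lemma bnd1 v : v != 0 -> exists w, b v w != 0.
Proof.
move=> v0; move: v0; apply: contra_neqP => hn; apply: he => p.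
apply/eqP; apply/negPn/negP => ne; apply: hn; exists (e p).
by apply: contraNneq ne => ->; rewrite mxE.
Qed.

Lemma bDl1 u v : v != 0 -> (forall w, b v w = 0 -> b u w = 0) -> exists t, u = t *: v.
Proof.
move=> v0 H.
have [q0 hq0] : exists q, om v (e q) != 0.
  move: v0; apply: contra_neqP => hn; apply: he => p.
  by apply/eqP; apply/negPn/negP => ne; apply: hn; exists p.
exists (om u (e q0) / om v (e q0)).
apply/eqP; rewrite -subr_eq0; apply/eqP; apply: he => p.
have := H (om v (e q0) *: e p + (- om v (e p)) *: e q0).
have e1 : forall x, om x (om v (e q0) *: e p + (- om v (e p)) *: e q0) =
   om v (e q0) * om x (e p) - om v (e p) * om x (e q0).
  by move=> x; rewrite om_r -[_ *: e q0]addr0 om_r /om b0r1 mxE; ring.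
move=> h.
have hb : b v (om v (e q0) *: e p + (- om v (e p)) *: e q0) = 0.
  by apply: r1_eq; rewrite -/(om v _) e1 mxE; ring.
have h2 : om u (om v (e q0) *: e p + (- om v (e p)) *: e q0) = 0 by rewrite /om (h hb) mxE.
rewrite e1 in h2.
set c := om u (e q0) / om v (e q0).
have -> : u - c *: v = 1 *: u + ((- c) *: v + 0) by rewrite scale1r addr0 scaleNr.
change (om (1 *: u + ((- c) *: v + 0)) (e p) = 0).
rewrite om_l om_l /om b0l1 mxE -/(om u _) -/(om v _).
transitivity ((om v (e q0) * om u (e p) - om v (e p) * om u (e q0)) / om v (e q0)).
  by rewrite /c; field.
by rewrite h2 mul0r.
Qed.
End Rank1.

Section HeisInst.
Variable R : realType.
Variable n : nat.

Lemma heis_delta (x : 'M[R]_(n,2)) i j :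
  bracket_heis x (delta_mx i j) 0 0 = if j == ord_max then x i ord0 else - x i ord_max.
Proof.
rewrite mxE (bigD1 i) //= big1 ?addr0 => [|k ki]; last first.
  by rewrite !mxE (negbTE ki) /= !mulr0 subrr.
rewrite !mxE eqxx /=.
case: j => -[|[|//]] hj /=; rewrite /eq_op /= ?mulr1 ?mulr0; ring.
Qed.

Lemma heis_bl a (u v w : 'M[R]_(n,2)) :
  bracket_heis (a *: u + v) w = a *: bracket_heis u w + bracket_heis v w.
Proof.
apply/rowP => j; rewrite !mxE big_distrr -big_split; apply: eq_bigr => i _; rewrite !mxE /=; ring.
Qed.
Lemma heis_skew (v w : 'M[R]_(n,2)) : bracket_heis w v = - bracket_heis v w.
Proof. apply/rowP => j; rewrite !mxE -sumrN; apply: eq_bigr => i _; ring. Qed.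

Lemma heis_he (x : 'M[R]_(n,2)) :
  (forall p : 'I_n * 'I_2, bracket_heis x (delta_mx p.1 p.2) 0 0 = 0) -> x = 0.
Proof.
move=> H; apply/matrixP => i j; rewrite mxE.
have h1 := H (i, ord_max); have h0 := H (i, ord0).
rewrite heis_delta /= in h1; rewrite heis_delta /= in h0.
case: j => -[|[|//]] hj.
  by rewrite (_ : Ordinal hj = ord0) //; apply/val_inj.
rewrite (_ : Ordinal hj = ord_max); last by apply/val_inj.
by apply/eqP; rewrite -oppr_eq0; apply/eqP.
Qed.

Lemma heis_bs : (0 < n)%N -> forall z : 'rV[R]_1, exists v w : 'M[R]_(n,2), z = bracket_heis v w.
Proof.
move=> n0 z; pose i0 := Ordinal n0.
exists (delta_mx i0 ord0), (z 0 0 *: delta_mx i0 ord_max).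
apply/rowP => j; rewrite ord1 heis_skew -[_ *: _]addr0 heis_bl.
rewrite [in RHS]mxE [in RHS]mxE [in RHS]mxE heis_delta /=.
rewrite heis_delta /= !mxE !eqxx /=. ring.
Qed.

Lemma heis_ok : (0 < n)%N -> aut_central_times_lie (@mul_heis R n) (@inv_heis R n).
Proof.
move=> n0; apply: (generic heis_bl heis_skew).
- exact: (bnd1 (heis_he)).

- exact: (bDl1 heis_bl heis_skew heis_he).
- exact: heis_bs.
Qed.
End HeisInst.

Section Coords.
Variable R : realType.
Implicit Types (p q : 'rV[R]_4) (x y : 'rV[R]_8).

Lemma coD m n (A B : 'M[R]_(m,n)) i j : (A + B) i j = A i j + B i j. Proof. by rewrite mxE. Qed.
Lemma coN m n (A : 'M[R]_(m,n)) i j : (- A) i j = - A i j. Proof. by rewrite mxE. Qed.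
Lemma coZ m n a (A : 'M[R]_(m,n)) i j : (a *: A) i j = a * A i j. Proof. by rewrite mxE. Qed.
Lemma co0 m n i j : (0 : 'M[R]_(m,n)) i j = 0. Proof. by rewrite mxE. Qed.
Lemma coRow m n (A : 'M[R]_(m,n)) i j : (row i A) 0 j = A i j. Proof. by rewrite mxE. Qed.

Lemma qmulE p q k : (k < 4)%N -> (qmul p q) 0 (inord k) =
  nth 0 [:: p 0 (inord 0) * q 0 (inord 0) - p 0 (inord 1) * q 0 (inord 1) - p 0 (inord 2) * q 0 (inord 2) - p 0 (inord 3) * q 0 (inord 3);
            p 0 (inord 0) * q 0 (inord 1) + p 0 (inord 1) * q 0 (inord 0) + p 0 (inord 2) * q 0 (inord 3) - p 0 (inord 3) * q 0 (inord 2);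
            p 0 (inord 0) * q 0 (inord 2) - p 0 (inord 1) * q 0 (inord 3) + p 0 (inord 2) * q 0 (inord 0) + p 0 (inord 3) * q 0 (inord 1);
            p 0 (inord 0) * q 0 (inord 3) + p 0 (inord 1) * q 0 (inord 2) - p 0 (inord 2) * q 0 (inord 1) + p 0 (inord 3) * q 0 (inord 0)] k.
Proof. by move=> k4; rewrite mxE inordK. Qed.
Lemma qconjE p k : (k < 4)%N -> (qconj p) 0 (inord k) = if k == 0%N then p 0 (inord k) else - p 0 (inord k).
Proof. by move=> k4; rewrite mxE inordK. Qed.
Lemma ofstE x k : (k < 4)%N -> (ofst x) 0 (inord k) = x 0 (inord k).
Proof. by move=> k4; rewrite mxE inordK. Qed.
Lemma osndE x k : (k < 4)%N -> (osnd x) 0 (inord k) = x 0 (inord k.+4).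
Proof. by move=> k4; rewrite mxE inordK // addn4. Qed.
Lemma omkE1 p q k : (k < 4)%N -> (omk p q) 0 (inord k) = p 0 (inord k).
Proof. by move=> k4; rewrite mxE !inordK ?k4 // (ltn_trans k4). Qed.
Lemma omkE2 p q k : (k < 4)%N -> (omk p q) 0 (inord k.+4) = q 0 (inord k).
Proof. by move=> k4; rewrite mxE !inordK //= subSS subSS subSS subSS subn0. Qed.
Lemma imagE n (p : 'rV[R]_n.+2) k : (k < n.+1)%N -> (imag p) 0 (inord k) = p 0 (inord k.+1).
Proof.
move=> kn; rewrite mxE; congr (p 0 _); apply: val_inj => /=.
by rewrite /bump /= !inordK // ltnS ltnW.
Qed.

Lemma ordP n (P : 'I_n.+1 -> Prop) : (forall k, (k < n.+1)%N -> P (inord k)) -> forall j, P j.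
Proof. by move=> H j; rewrite -(inord_val j); apply: H. Qed.

End Coords.

Ltac osimp := rewrite /omul /oconj /qc; do ![rewrite ?omkE2 ?omkE1 ?ofstE ?osndE ?qmulE ?qconjE ?imagE ?coD ?coN ?coZ ?co0 ?coRow //=].


Ltac ocases k k7 := case: k k7 => [|[|[|[|[|[|[|[|//]]]]]]]] k7.

Lemma rowlistE (R : realType) n (L : seq R) k : (k < n.+1)%N ->
  (\row_(j < n.+1) nth 0 L j) 0 (inord k) = nth 0 L k.
Proof. by move=> kn; rewrite mxE inordK. Qed.

Fact rl_key : unit. Proof. exact: tt. Qed.
Definition rl (R : realType) n (L : seq R) : 'rV[R]_n := locked_with rl_key (\row_(j < n) nth 0 L j).
Lemma rlE (R : realType) n (L : seq R) k : (k < n.+1)%N -> (rl n.+1 L) 0 (inord k) = nth 0 L k.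
Proof. by move=> kn; rewrite /rl unlock rowlistE. Qed.

Section Oct.
Variable R : realType.
Implicit Types (u v w x y : 'rV[R]_8).

Definition omulL x y : seq R := [::
    x 0 (inord 0) * y 0 (inord 0) - x 0 (inord 1) * y 0 (inord 1) - x 0 (inord 2) * y 0 (inord 2) - x 0 (inord 3) * y 0 (inord 3) - (y 0 (inord 4) * x 0 (inord 4) - - y 0 (inord 5) * x 0 (inord 5) - - y 0 (inord 6) * x 0 (inord 6) - - y 0 (inord 7) * x 0 (inord 7));
    x 0 (inord 0) * y 0 (inord 1) + x 0 (inord 1) * y 0 (inord 0) + x 0 (inord 2) * y 0 (inord 3) - x 0 (inord 3) * y 0 (inord 2) - (y 0 (inord 4) * x 0 (inord 5) + - y 0 (inord 5) * x 0 (inord 4) + - y 0 (inord 6) * x 0 (inord 7) - - y 0 (inord 7) * x 0 (inord 6));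
    x 0 (inord 0) * y 0 (inord 2) - x 0 (inord 1) * y 0 (inord 3) + x 0 (inord 2) * y 0 (inord 0) + x 0 (inord 3) * y 0 (inord 1) - (y 0 (inord 4) * x 0 (inord 6) - - y 0 (inord 5) * x 0 (inord 7) + - y 0 (inord 6) * x 0 (inord 4) + - y 0 (inord 7) * x 0 (inord 5));
    x 0 (inord 0) * y 0 (inord 3) + x 0 (inord 1) * y 0 (inord 2) - x 0 (inord 2) * y 0 (inord 1) + x 0 (inord 3) * y 0 (inord 0) - (y 0 (inord 4) * x 0 (inord 7) + - y 0 (inord 5) * x 0 (inord 6) - - y 0 (inord 6) * x 0 (inord 5) + - y 0 (inord 7) * x 0 (inord 4));
    y 0 (inord 4) * x 0 (inord 0) - y 0 (inord 5) * x 0 (inord 1) - y 0 (inord 6) * x 0 (inord 2) - y 0 (inord 7) * x 0 (inord 3) + (x 0 (inord 4) * y 0 (inord 0) - x 0 (inord 5) * - y 0 (inord 1) - x 0 (inord 6) * - y 0 (inord 2) - x 0 (inord 7) * - y 0 (inord 3));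
    y 0 (inord 4) * x 0 (inord 1) + y 0 (inord 5) * x 0 (inord 0) + y 0 (inord 6) * x 0 (inord 3) - y 0 (inord 7) * x 0 (inord 2) + (x 0 (inord 4) * - y 0 (inord 1) + x 0 (inord 5) * y 0 (inord 0) + x 0 (inord 6) * - y 0 (inord 3) - x 0 (inord 7) * - y 0 (inord 2));
    y 0 (inord 4) * x 0 (inord 2) - y 0 (inord 5) * x 0 (inord 3) + y 0 (inord 6) * x 0 (inord 0) + y 0 (inord 7) * x 0 (inord 1) + (x 0 (inord 4) * - y 0 (inord 2) - x 0 (inord 5) * - y 0 (inord 3) + x 0 (inord 6) * y 0 (inord 0) + x 0 (inord 7) * - y 0 (inord 1));
    y 0 (inord 4) * x 0 (inord 3) + y 0 (inord 5) * x 0 (inord 2) - y 0 (inord 6) * x 0 (inord 1) + y 0 (inord 7) * x 0 (inord 0) + (x 0 (inord 4) * - y 0 (inord 3) + x 0 (inord 5) * - y 0 (inord 2) - x 0 (inord 6) * - y 0 (inord 1) + x 0 (inord 7) * y 0 (inord 0))].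
Definition omulF x y := rl 8 (omulL x y).
Definition conjL v : seq R := [:: v 0 (inord 0); - v 0 (inord 1); - v 0 (inord 2); - v 0 (inord 3);
   - v 0 (inord 4); - v 0 (inord 5); - v 0 (inord 6); - v 0 (inord 7)].
Definition oconjF v := rl 8 (conjL v).


Implicit Types (p : 'rV[R]_8) (z : 'rV[R]_7).
Definition im0 p := rl 8 [:: 0; p 0 (inord 1); p 0 (inord 2);
  p 0 (inord 3); p 0 (inord 4); p 0 (inord 5); p 0 (inord 6); p 0 (inord 7)].
Definition oe0 : 'rV[R]_8 := rl 8 [:: 1; 0; 0; 0; 0; 0; 0; 0].
Definition oe1 : 'rV[R]_8 := rl 8 [:: 0; 1; 0; 0; 0; 0; 0; 0].
Definition oemb z := rl 8 [:: 0; z 0 (inord 0); z 0 (inord 1);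
  z 0 (inord 2); z 0 (inord 3); z 0 (inord 4); z 0 (inord 5); z 0 (inord 6)].
Lemma omulF_0 x y : (omulF x y) 0 (inord 0) = x 0 (inord 0) * y 0 (inord 0) - x 0 (inord 1) * y 0 (inord 1) - x 0 (inord 2) * y 0 (inord 2) - x 0 (inord 3) * y 0 (inord 3) - (y 0 (inord 4) * x 0 (inord 4) - - y 0 (inord 5) * x 0 (inord 5) - - y 0 (inord 6) * x 0 (inord 6) - - y 0 (inord 7) * x 0 (inord 7)).
Proof. by rewrite /omulF  rlE. Qed.
Lemma omulF_1 x y : (omulF x y) 0 (inord 1) = x 0 (inord 0) * y 0 (inord 1) + x 0 (inord 1) * y 0 (inord 0) + x 0 (inord 2) * y 0 (inord 3) - x 0 (inord 3) * y 0 (inord 2) - (y 0 (inord 4) * x 0 (inord 5) + - y 0 (inord 5) * x 0 (inord 4) + - y 0 (inord 6) * x 0 (inord 7) - - y 0 (inord 7) * x 0 (inord 6)).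
Proof. by rewrite /omulF  rlE. Qed.
Lemma omulF_2 x y : (omulF x y) 0 (inord 2) = x 0 (inord 0) * y 0 (inord 2) - x 0 (inord 1) * y 0 (inord 3) + x 0 (inord 2) * y 0 (inord 0) + x 0 (inord 3) * y 0 (inord 1) - (y 0 (inord 4) * x 0 (inord 6) - - y 0 (inord 5) * x 0 (inord 7) + - y 0 (inord 6) * x 0 (inord 4) + - y 0 (inord 7) * x 0 (inord 5)).
Proof. by rewrite /omulF  rlE. Qed.
Lemma omulF_3 x y : (omulF x y) 0 (inord 3) = x 0 (inord 0) * y 0 (inord 3) + x 0 (inord 1) * y 0 (inord 2) - x 0 (inord 2) * y 0 (inord 1) + x 0 (inord 3) * y 0 (inord 0) - (y 0 (inord 4) * x 0 (inord 7) + - y 0 (inord 5) * x 0 (inord 6) - - y 0 (inord 6) * x 0 (inord 5) + - y 0 (inord 7) * x 0 (inord 4)).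
Proof. by rewrite /omulF  rlE. Qed.
Lemma omulF_4 x y : (omulF x y) 0 (inord 4) = y 0 (inord 4) * x 0 (inord 0) - y 0 (inord 5) * x 0 (inord 1) - y 0 (inord 6) * x 0 (inord 2) - y 0 (inord 7) * x 0 (inord 3) + (x 0 (inord 4) * y 0 (inord 0) - x 0 (inord 5) * - y 0 (inord 1) - x 0 (inord 6) * - y 0 (inord 2) - x 0 (inord 7) * - y 0 (inord 3)).
Proof. by rewrite /omulF  rlE. Qed.
Lemma omulF_5 x y : (omulF x y) 0 (inord 5) = y 0 (inord 4) * x 0 (inord 1) + y 0 (inord 5) * x 0 (inord 0) + y 0 (inord 6) * x 0 (inord 3) - y 0 (inord 7) * x 0 (inord 2) + (x 0 (inord 4) * - y 0 (inord 1) + x 0 (inord 5) * y 0 (inord 0) + x 0 (inord 6) * - y 0 (inord 3) - x 0 (inord 7) * - y 0 (inord 2)).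
Proof. by rewrite /omulF  rlE. Qed.
Lemma omulF_6 x y : (omulF x y) 0 (inord 6) = y 0 (inord 4) * x 0 (inord 2) - y 0 (inord 5) * x 0 (inord 3) + y 0 (inord 6) * x 0 (inord 0) + y 0 (inord 7) * x 0 (inord 1) + (x 0 (inord 4) * - y 0 (inord 2) - x 0 (inord 5) * - y 0 (inord 3) + x 0 (inord 6) * y 0 (inord 0) + x 0 (inord 7) * - y 0 (inord 1)).
Proof. by rewrite /omulF  rlE. Qed.
Lemma omulF_7 x y : (omulF x y) 0 (inord 7) = y 0 (inord 4) * x 0 (inord 3) + y 0 (inord 5) * x 0 (inord 2) - y 0 (inord 6) * x 0 (inord 1) + y 0 (inord 7) * x 0 (inord 0) + (x 0 (inord 4) * - y 0 (inord 3) + x 0 (inord 5) * - y 0 (inord 2) - x 0 (inord 6) * - y 0 (inord 1) + x 0 (inord 7) * y 0 (inord 0)).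
Proof. by rewrite /omulF  rlE. Qed.
Definition omulFE := (omulF_0, omulF_1, omulF_2, omulF_3, omulF_4, omulF_5, omulF_6, omulF_7).
Lemma oconjF_0 v : (oconjF v) 0 (inord 0) = v 0 (inord 0).
Proof. by rewrite /oconjF  rlE. Qed.
Lemma oconjF_1 v : (oconjF v) 0 (inord 1) = - v 0 (inord 1).
Proof. by rewrite /oconjF  rlE. Qed.
Lemma oconjF_2 v : (oconjF v) 0 (inord 2) = - v 0 (inord 2).
Proof. by rewrite /oconjF  rlE. Qed.
Lemma oconjF_3 v : (oconjF v) 0 (inord 3) = - v 0 (inord 3).
Proof. by rewrite /oconjF  rlE. Qed.
Lemma oconjF_4 v : (oconjF v) 0 (inord 4) = - v 0 (inord 4).
Proof. by rewrite /oconjF  rlE. Qed.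
Lemma oconjF_5 v : (oconjF v) 0 (inord 5) = - v 0 (inord 5).
Proof. by rewrite /oconjF  rlE. Qed.
Lemma oconjF_6 v : (oconjF v) 0 (inord 6) = - v 0 (inord 6).
Proof. by rewrite /oconjF  rlE. Qed.
Lemma oconjF_7 v : (oconjF v) 0 (inord 7) = - v 0 (inord 7).
Proof. by rewrite /oconjF  rlE. Qed.
Definition oconjFE := (oconjF_0, oconjF_1, oconjF_2, oconjF_3, oconjF_4, oconjF_5, oconjF_6, oconjF_7).
Lemma im0_0 p : (im0 p) 0 (inord 0) = 0.
Proof. by rewrite /im0  rlE. Qed.
Lemma im0_1 p : (im0 p) 0 (inord 1) = p 0 (inord 1).
Proof. by rewrite /im0  rlE. Qed.
Lemma im0_2 p : (im0 p) 0 (inord 2) = p 0 (inord 2).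
Proof. by rewrite /im0  rlE. Qed.
Lemma im0_3 p : (im0 p) 0 (inord 3) = p 0 (inord 3).
Proof. by rewrite /im0  rlE. Qed.
Lemma im0_4 p : (im0 p) 0 (inord 4) = p 0 (inord 4).
Proof. by rewrite /im0  rlE. Qed.
Lemma im0_5 p : (im0 p) 0 (inord 5) = p 0 (inord 5).
Proof. by rewrite /im0  rlE. Qed.
Lemma im0_6 p : (im0 p) 0 (inord 6) = p 0 (inord 6).
Proof. by rewrite /im0  rlE. Qed.
Lemma im0_7 p : (im0 p) 0 (inord 7) = p 0 (inord 7).
Proof. by rewrite /im0  rlE. Qed.
Definition im0E := (im0_0, im0_1, im0_2, im0_3, im0_4, im0_5, im0_6, im0_7).
Lemma oe0_0 : (oe0 ) 0 (inord 0) = 1.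
Proof. by rewrite /oe0  rlE. Qed.
Lemma oe0_1 : (oe0 ) 0 (inord 1) = 0.
Proof. by rewrite /oe0  rlE. Qed.
Lemma oe0_2 : (oe0 ) 0 (inord 2) = 0.
Proof. by rewrite /oe0  rlE. Qed.
Lemma oe0_3 : (oe0 ) 0 (inord 3) = 0.
Proof. by rewrite /oe0  rlE. Qed.
Lemma oe0_4 : (oe0 ) 0 (inord 4) = 0.
Proof. by rewrite /oe0  rlE. Qed.
Lemma oe0_5 : (oe0 ) 0 (inord 5) = 0.
Proof. by rewrite /oe0  rlE. Qed.
Lemma oe0_6 : (oe0 ) 0 (inord 6) = 0.
Proof. by rewrite /oe0  rlE. Qed.
Lemma oe0_7 : (oe0 ) 0 (inord 7) = 0.
Proof. by rewrite /oe0  rlE. Qed.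
Definition oe0E := (oe0_0, oe0_1, oe0_2, oe0_3, oe0_4, oe0_5, oe0_6, oe0_7).
Lemma oe1_0 : (oe1 ) 0 (inord 0) = 0.
Proof. by rewrite /oe1  rlE. Qed.
Lemma oe1_1 : (oe1 ) 0 (inord 1) = 1.
Proof. by rewrite /oe1  rlE. Qed.
Lemma oe1_2 : (oe1 ) 0 (inord 2) = 0.
Proof. by rewrite /oe1  rlE. Qed.
Lemma oe1_3 : (oe1 ) 0 (inord 3) = 0.
Proof. by rewrite /oe1  rlE. Qed.
Lemma oe1_4 : (oe1 ) 0 (inord 4) = 0.
Proof. by rewrite /oe1  rlE. Qed.
Lemma oe1_5 : (oe1 ) 0 (inord 5) = 0.
Proof. by rewrite /oe1  rlE. Qed.
Lemma oe1_6 : (oe1 ) 0 (inord 6) = 0.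
Proof. by rewrite /oe1  rlE. Qed.
Lemma oe1_7 : (oe1 ) 0 (inord 7) = 0.
Proof. by rewrite /oe1  rlE. Qed.
Definition oe1E := (oe1_0, oe1_1, oe1_2, oe1_3, oe1_4, oe1_5, oe1_6, oe1_7).
Lemma oemb_0 z : (oemb z) 0 (inord 0) = 0.
Proof. by rewrite /oemb  rlE. Qed.
Lemma oemb_1 z : (oemb z) 0 (inord 1) = z 0 (inord 0).
Proof. by rewrite /oemb  rlE. Qed.
Lemma oemb_2 z : (oemb z) 0 (inord 2) = z 0 (inord 1).
Proof. by rewrite /oemb  rlE. Qed.
Lemma oemb_3 z : (oemb z) 0 (inord 3) = z 0 (inord 2).
Proof. by rewrite /oemb  rlE. Qed.
Lemma oemb_4 z : (oemb z) 0 (inord 4) = z 0 (inord 3).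
Proof. by rewrite /oemb  rlE. Qed.
Lemma oemb_5 z : (oemb z) 0 (inord 5) = z 0 (inord 4).
Proof. by rewrite /oemb  rlE. Qed.
Lemma oemb_6 z : (oemb z) 0 (inord 6) = z 0 (inord 5).
Proof. by rewrite /oemb  rlE. Qed.
Lemma oemb_7 z : (oemb z) 0 (inord 7) = z 0 (inord 6).
Proof. by rewrite /oemb  rlE. Qed.
Definition oembE := (oemb_0, oemb_1, oemb_2, oemb_3, oemb_4, oemb_5, oemb_6, oemb_7).

Lemma omulE x y : omul x y = omulF x y.
Proof.
apply/rowP; apply: ordP => k k7; rewrite /omulF rlE //.
by ocases k k7; osimp.
Qed.

Lemma oconj_F v : oconj v = oconjF v.
Proof.
apply/rowP; apply: ordP => k k7; rewrite /oconjF rlE //.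
by ocases k k7; osimp.
Qed.

Lemma boE v w k : (k < 7)%N -> (bracket_oheis v w) 0 (inord k) = (omulF (oconjF v) w) 0 (inord k.+1).
Proof. by move=> k7; rewrite /bracket_oheis imagE // omulE oconj_F. Qed.

Definition coE := (coD, coN, coZ, co0).
Lemma oh_bl a u v w : bracket_oheis (a *: u + v) w = a *: bracket_oheis u w + bracket_oheis v w.
Proof.
apply/rowP; apply: ordP => k k7; rewrite coD coZ.
by ocases k k7; rewrite !boE // !omulFE !oconjFE !coE; ring.
Qed.

Lemma oh_skew v w : bracket_oheis w v = - bracket_oheis v w.
Proof.
apply/rowP; apply: ordP => k k7; rewrite coN.
by ocases k k7; rewrite !boE // !omulFE !oconjFE; ring.
Qed.
End Oct.

Section O2.
Variable R : realType.
Implicit Types (u v w x y : 'rV[R]_8).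

Definition onrm v := v 0 (inord 0) ^+ 2 + v 0 (inord 1) ^+ 2 + v 0 (inord 2) ^+ 2 + v 0 (inord 3) ^+ 2
  + v 0 (inord 4) ^+ 2 + v 0 (inord 5) ^+ 2 + v 0 (inord 6) ^+ 2 + v 0 (inord 7) ^+ 2.

Lemma oalt u v : onrm v *: u - ((omulF (oconjF u) v) 0 (inord 0)) *: v
   + omulF v (im0 (omulF (oconjF u) v)) = 0.
Proof.
apply/rowP; apply: ordP => k k7; rewrite /onrm.
by ocases k k7; rewrite !coE !omulFE !im0E !omulFE !oconjFE; ring.
Qed.

Lemma omul0 v : omulF v 0 = 0.
Proof. by apply/rowP; apply: ordP => k k7; ocases k k7; rewrite !omulFE !co0; ring. Qed.

Lemma onrm_eq0 v : onrm v = 0 -> v = 0.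
Proof.
move=> h; have h0 := sqr_ge0 (v 0 (inord 0)); have h1 := sqr_ge0 (v 0 (inord 1)).
have h2 := sqr_ge0 (v 0 (inord 2)); have h3 := sqr_ge0 (v 0 (inord 3)).
have h4 := sqr_ge0 (v 0 (inord 4)); have h5 := sqr_ge0 (v 0 (inord 5)).
have h6 := sqr_ge0 (v 0 (inord 6)); have h7 := sqr_ge0 (v 0 (inord 7)).
rewrite /onrm in h.
apply/rowP; apply: ordP => k k8; rewrite co0; ocases k k8;
  apply/eqP; rewrite -sqrf_eq0 eq_le sqr_ge0 andbT; lra.
Qed.


Lemma oh_bnd v : v != 0 -> exists w, bracket_oheis v w != 0.
Proof.
move=> v0; exists (omulF v (oe1 R)); apply/negP => /eqP h.
have e : (bracket_oheis v (omulF v (oe1 R))) 0 (inord 0) = onrm v.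
  by rewrite /onrm boE // !omulFE !oconjFE !oe1E; ring.
move: e; rewrite h co0 => /esym /onrm_eq0 /eqP; exact/negP.
Qed.

Lemma oh_bs z : exists v w, z = bracket_oheis v w.
Proof.
exists (oe0 R), (oemb z); apply/rowP; apply: ordP => k k7.
by ocases k k7; rewrite boE // !omulFE !oconjFE !oe0E !oembE; ring.
Qed.

Lemma oh_bDl u v : v != 0 -> (forall w, bracket_oheis v w = 0 -> bracket_oheis u w = 0) ->
  exists t, u = t *: v.
Proof.
move=> v0 H.
have hu : bracket_oheis u v = 0 by apply: H; apply: xNx; exact: oh_skew.
have hc j : (j < 7)%N -> (omulF (oconjF u) v) 0 (inord j.+1) = 0.
  by move=> j7; rewrite -boE // hu co0.
have him : im0 (omulF (oconjF u) v) = 0.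
  apply/rowP; apply: ordP => k k7; rewrite co0.
  by ocases k k7; rewrite im0E ?hc.
have := oalt u v; rewrite him omul0 addr0 => /eqP; rewrite subr_eq0 => /eqP e.
have N0 : onrm v != 0 by apply/negP => /eqP /onrm_eq0 /eqP; apply/negP.
exists ((omulF (oconjF u) v) 0 (inord 0) / onrm v).
by rewrite mulrC -scalerA -e scalerA mulVf // scale1r.
Qed.

Lemma oheis_ok : aut_central_times_lie (@mul_oheis R) (@inv_oheis R).
Proof.
apply: (generic (@oh_bl R) (@oh_skew R)).
- exact: oh_bnd.
- exact: oh_bDl.
- exact: oh_bs.
Qed.
End O2.

Ltac qcases k k7 := case: k k7 => [|[|[|[|//]]]] k7.
Ltac tcases k k7 := case: k k7 => [|[|[|//]]] k7.
Section Quat.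
Variable R : realType.
Implicit Types (p q r s : 'rV[R]_4) (z : 'rV[R]_3).
Definition qmulF p q := rl 4 [:: p 0 (inord 0) * q 0 (inord 0) - p 0 (inord 1) * q 0 (inord 1) - p 0 (inord 2) * q 0 (inord 2) - p 0 (inord 3) * q 0 (inord 3); p 0 (inord 0) * q 0 (inord 1) + p 0 (inord 1) * q 0 (inord 0) + p 0 (inord 2) * q 0 (inord 3) - p 0 (inord 3) * q 0 (inord 2); p 0 (inord 0) * q 0 (inord 2) - p 0 (inord 1) * q 0 (inord 3) + p 0 (inord 2) * q 0 (inord 0) + p 0 (inord 3) * q 0 (inord 1); p 0 (inord 0) * q 0 (inord 3) + p 0 (inord 1) * q 0 (inord 2) - p 0 (inord 2) * q 0 (inord 1) + p 0 (inord 3) * q 0 (inord 0)].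
Definition qconjF p := rl 4 [:: p 0 (inord 0); - p 0 (inord 1); - p 0 (inord 2); - p 0 (inord 3)].
Definition qim0 p := rl 4 [:: 0; p 0 (inord 1); p 0 (inord 2); p 0 (inord 3)].
Definition qe0 : 'rV[R]_4 := rl 4 [:: 1; 0; 0; 0].
Definition qe1 : 'rV[R]_4 := rl 4 [:: 0; 1; 0; 0].
Definition qemb z := rl 4 [:: 0; z 0 (inord 0); z 0 (inord 1); z 0 (inord 2)].
Definition e3 : 'rV[R]_3 := rl 3 [:: 1; 0; 0].

Lemma qmulF_0 p q: (qmulF p q) 0 (inord 0) = p 0 (inord 0) * q 0 (inord 0) - p 0 (inord 1) * q 0 (inord 1) - p 0 (inord 2) * q 0 (inord 2) - p 0 (inord 3) * q 0 (inord 3).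
Proof. by rewrite /qmulF rlE. Qed.
Lemma qmulF_1 p q: (qmulF p q) 0 (inord 1) = p 0 (inord 0) * q 0 (inord 1) + p 0 (inord 1) * q 0 (inord 0) + p 0 (inord 2) * q 0 (inord 3) - p 0 (inord 3) * q 0 (inord 2).
Proof. by rewrite /qmulF rlE. Qed.
Lemma qmulF_2 p q: (qmulF p q) 0 (inord 2) = p 0 (inord 0) * q 0 (inord 2) - p 0 (inord 1) * q 0 (inord 3) + p 0 (inord 2) * q 0 (inord 0) + p 0 (inord 3) * q 0 (inord 1).
Proof. by rewrite /qmulF rlE. Qed.
Lemma qmulF_3 p q: (qmulF p q) 0 (inord 3) = p 0 (inord 0) * q 0 (inord 3) + p 0 (inord 1) * q 0 (inord 2) - p 0 (inord 2) * q 0 (inord 1) + p 0 (inord 3) * q 0 (inord 0).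
Proof. by rewrite /qmulF rlE. Qed.
Definition qmulFE := (qmulF_0, qmulF_1, qmulF_2, qmulF_3).
Lemma qconjF_0 p: (qconjF p) 0 (inord 0) = p 0 (inord 0).
Proof. by rewrite /qconjF rlE. Qed.
Lemma qconjF_1 p: (qconjF p) 0 (inord 1) = - p 0 (inord 1).
Proof. by rewrite /qconjF rlE. Qed.
Lemma qconjF_2 p: (qconjF p) 0 (inord 2) = - p 0 (inord 2).
Proof. by rewrite /qconjF rlE. Qed.
Lemma qconjF_3 p: (qconjF p) 0 (inord 3) = - p 0 (inord 3).
Proof. by rewrite /qconjF rlE. Qed.
Definition qconjFE := (qconjF_0, qconjF_1, qconjF_2, qconjF_3).
Lemma qim0_0 p: (qim0 p) 0 (inord 0) = 0.
Proof. by rewrite /qim0 rlE. Qed.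
Lemma qim0_1 p: (qim0 p) 0 (inord 1) = p 0 (inord 1).
Proof. by rewrite /qim0 rlE. Qed.
Lemma qim0_2 p: (qim0 p) 0 (inord 2) = p 0 (inord 2).
Proof. by rewrite /qim0 rlE. Qed.
Lemma qim0_3 p: (qim0 p) 0 (inord 3) = p 0 (inord 3).
Proof. by rewrite /qim0 rlE. Qed.
Definition qim0E := (qim0_0, qim0_1, qim0_2, qim0_3).
Lemma qe0_0 : qe0 0 (inord 0) = 1.
Proof. by rewrite /qe0 rlE. Qed.
Lemma qe0_1 : qe0 0 (inord 1) = 0.
Proof. by rewrite /qe0 rlE. Qed.
Lemma qe0_2 : qe0 0 (inord 2) = 0.
Proof. by rewrite /qe0 rlE. Qed.
Lemma qe0_3 : qe0 0 (inord 3) = 0.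
Proof. by rewrite /qe0 rlE. Qed.
Definition qe0E := (qe0_0, qe0_1, qe0_2, qe0_3).
Lemma qe1_0 : qe1 0 (inord 0) = 0.
Proof. by rewrite /qe1 rlE. Qed.
Lemma qe1_1 : qe1 0 (inord 1) = 1.
Proof. by rewrite /qe1 rlE. Qed.
Lemma qe1_2 : qe1 0 (inord 2) = 0.
Proof. by rewrite /qe1 rlE. Qed.
Lemma qe1_3 : qe1 0 (inord 3) = 0.
Proof. by rewrite /qe1 rlE. Qed.
Definition qe1E := (qe1_0, qe1_1, qe1_2, qe1_3).
Lemma qemb_0 z: (qemb z) 0 (inord 0) = 0.
Proof. by rewrite /qemb rlE. Qed.
Lemma qemb_1 z: (qemb z) 0 (inord 1) = z 0 (inord 0).
Proof. by rewrite /qemb rlE. Qed.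
Lemma qemb_2 z: (qemb z) 0 (inord 2) = z 0 (inord 1).
Proof. by rewrite /qemb rlE. Qed.
Lemma qemb_3 z: (qemb z) 0 (inord 3) = z 0 (inord 2).
Proof. by rewrite /qemb rlE. Qed.
Definition qembE := (qemb_0, qemb_1, qemb_2, qemb_3).
Lemma e3_0 : e3 0 (inord 0) = 1.
Proof. by rewrite /e3 rlE. Qed.
Lemma e3_1 : e3 0 (inord 1) = 0.
Proof. by rewrite /e3 rlE. Qed.
Lemma e3_2 : e3 0 (inord 2) = 0.
Proof. by rewrite /e3 rlE. Qed.
Definition e3E := (e3_0, e3_1, e3_2).
Definition qb p q : 'rV[R]_3 := imag (qmul (qconj p) q).
Definition qnrm p := p 0 (inord 0) ^+ 2 + p 0 (inord 1) ^+ 2 + p 0 (inord 2) ^+ 2 + p 0 (inord 3) ^+ 2.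

Lemma qmul_F p q : qmul p q = qmulF p q.
Proof. by apply/rowP; apply: ordP => k k4; qcases k k4; rewrite qmulFE qmulE. Qed.
Lemma qconj_F p : qconj p = qconjF p.
Proof. by apply/rowP; apply: ordP => k k4; qcases k k4; rewrite qconjFE qconjE. Qed.
Lemma qbE p q k : (k < 3)%N -> (qb p q) 0 (inord k) = (qmulF (qconjF p) q) 0 (inord k.+1).
Proof. by move=> k3; rewrite /qb imagE // qmul_F qconj_F. Qed.

Lemma qb_bl a p q r : qb (a *: p + q) r = a *: qb p r + qb q r.
Proof. by apply/rowP; apply: ordP => k k3; rewrite !coE; tcases k k3; rewrite !qbE // !qmulFE !qconjFE !coE; ring. Qed.
Lemma qb_skew p q : qb q p = - qb p q.
Proof. by apply/rowP; apply: ordP => k k3; rewrite !coE; tcases k k3; rewrite !qbE // !qmulFE !qconjFE; ring. Qed.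
Lemma qb0l q : qb 0 q = 0.
Proof. by apply/rowP; apply: ordP => k k3; rewrite !coE; tcases k k3; rewrite !qbE // !qmulFE !qconjFE !coE; ring. Qed.
Lemma qb0r p : qb p 0 = 0.
Proof. by rewrite qb_skew qb0l oppr0. Qed.

Lemma qalt s r : qnrm r *: s - ((qmulF (qconjF s) r) 0 (inord 0)) *: r
   + qmulF r (qim0 (qmulF (qconjF s) r)) = 0.
Proof.
apply/rowP; apply: ordP => k k4; rewrite /qnrm.
by qcases k k4; rewrite !coE !qmulFE !qim0E !qmulFE !qconjFE; ring.
Qed.

Lemma qmul0 p : qmulF p 0 = 0.
Proof. by apply/rowP; apply: ordP => k k4; qcases k k4; rewrite !qmulFE !co0; ring. Qed.

Lemma qnrm_eq0 p : qnrm p = 0 -> p = 0.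
Proof.
move=> h; have h0 := sqr_ge0 (p 0 (inord 0)); have h1 := sqr_ge0 (p 0 (inord 1)).
have h2 := sqr_ge0 (p 0 (inord 2)); have h3 := sqr_ge0 (p 0 (inord 3)).
rewrite /qnrm in h.
apply/rowP; apply: ordP => k k8; rewrite co0; qcases k k8;
  apply/eqP; rewrite -sqrf_eq0 eq_le sqr_ge0 andbT; lra.
Qed.

Lemma qb_self r : qb r (qmulF r qe1) = qnrm r *: e3.
Proof.
by apply/rowP; apply: ordP => k k3; rewrite /qnrm; tcases k k3; rewrite !coE !qbE // !qmulFE !qconjFE !qe1E !e3E; ring.
Qed.

Lemma qb_zero s : qb s qe0 = 0 -> qb s qe1 = 0 -> s = 0.
Proof.
move=> h0 h1.
have a k : (k < 3)%N -> (qb s qe0) 0 (inord k) = 0 by move=> k3; rewrite h0 co0.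
have b k : (k < 3)%N -> (qb s qe1) 0 (inord k) = 0 by move=> k3; rewrite h1 co0.
have a0 := a 0%N isT; have a1 := a 1%N isT; have a2 := a 2%N isT; have b0 := b 0%N isT.
rewrite !qbE // !qmulFE !qconjFE ?qe0E ?qe1E in a0 a1 a2 b0.
apply/rowP; apply: ordP => k k4; rewrite co0; qcases k k4; lra.
Qed.

Lemma qpar s r : r != 0 -> qb s r = 0 ->
  s = ((qmulF (qconjF s) r) 0 (inord 0) / qnrm r) *: r.
Proof.
move=> r0 h.
have hc j : (j < 3)%N -> (qmulF (qconjF s) r) 0 (inord j.+1) = 0.
  by move=> j3; rewrite -qbE // h co0.
have him : qim0 (qmulF (qconjF s) r) = 0.
  apply/rowP; apply: ordP => k k4; rewrite co0.
  by qcases k k4; rewrite qim0E ?hc.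
have := qalt s r; rewrite him qmul0 addr0 => /eqP; rewrite subr_eq0 => /eqP e.
have N0 : qnrm r != 0 by apply/negP => /eqP /qnrm_eq0 /eqP; apply/negP.
by rewrite mulrC -scalerA -e scalerA mulVf // scale1r.
Qed.

Lemma qbZl c p q : qb (c *: p) q = c *: qb p q.
Proof. by rewrite -[c *: p]addr0 qb_bl qb0l addr0. Qed.
Lemma qbZr c p q : qb p (c *: q) = c *: qb p q.
Proof. by rewrite qb_skew qbZl -scalerN -qb_skew. Qed.
Lemma qb_e0 z : qb qe0 (qemb z) = z.
Proof. by apply/rowP; apply: ordP => k k3; tcases k k3; rewrite !qbE // !qmulFE !qconjFE !qe0E !qembE; ring. Qed.
Lemma e3_neq0 : e3 != 0.
Proof. by apply/negP => /eqP h; have := e3_0; rewrite h co0 => /eqP; rewrite eq_sym oner_eq0. Qed.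
End Quat.


Section QH.
Variable R : realType.
Variable n : nat.
Implicit Types (u v w : 'M[R]_(n,4)) (p q : 'rV[R]_4).

Definition embr a q : 'M[R]_(n,4) := \matrix_(i, j) if i == a then q 0 j else 0.
Lemma row_embr i a q : row i (embr a q) = if i == a then q else 0.
Proof. by apply/rowP => j; rewrite !mxE; case: eqP => _; rewrite ?mxE. Qed.
Lemma rowDZ i a u v : row i (a *: u + v) = a *: row i u + row i v.
Proof. by apply/rowP => j; rewrite !mxE. Qed.
Lemma rowZ' i a u : row i (a *: u) = a *: row i u.
Proof. by apply/rowP => j; rewrite !mxE. Qed.

Lemma bq_sum v w : bracket_qheis v w = \sum_i qb (row i v) (row i w).
Proof.
apply/rowP => j; rewrite [LHS]mxE summxE [RHS]summxE; apply: eq_bigr => i _.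
by rewrite /qb [RHS]mxE.
Qed.
Lemma bq_bl a u v w : bracket_qheis (a *: u + v) w = a *: bracket_qheis u w + bracket_qheis v w.
Proof.
rewrite !bq_sum scaler_sumr -big_split; apply: eq_bigr => i _.
by rewrite rowDZ qb_bl.
Qed.
Lemma bq_skew v w : bracket_qheis w v = - bracket_qheis v w.
Proof. by rewrite !bq_sum -sumrN; apply: eq_bigr => i _; rewrite qb_skew. Qed.
Lemma bq_emb v a q : bracket_qheis v (embr a q) = qb (row a v) q.
Proof.
rewrite bq_sum (bigD1 a) //= row_embr eqxx big1 ?addr0 // => i ia.
by rewrite row_embr (negbTE ia) qb0r.
Qed.
Lemma bq_addr v w1 w2 : bracket_qheis v (w1 + w2) = bracket_qheis v w1 + bracket_qheis v w2.
Proof.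
rewrite bq_skew (bq_skew w1 v) (bq_skew w2 v) -opprD.
have -> : w1 + w2 = 1 *: w1 + w2 by rewrite scale1r.
by rewrite bq_bl scale1r.
Qed.

Lemma row_nz v : v != 0 -> exists a, row a v != 0.
Proof.
move=> v0; move: v0; apply: contra_neqP => hn; apply/row_matrixP => a.
rewrite row0; apply/eqP; apply/negPn/negP => h; apply: hn; by exists a.
Qed.

Lemma bq_bnd v : v != 0 -> exists w, bracket_qheis v w != 0.
Proof.
move=> /row_nz [a ra]; exists (embr a (qmulF (row a v) (qe1 R))).
rewrite bq_emb qb_self scaler_eq0 negb_or e3_neq0 andbT.
by apply/negP => /eqP /qnrm_eq0 /eqP; apply/negP.
Qed.

Lemma bq_bs : (0 < n)%N -> forall z, exists v w, z = bracket_qheis v w.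
Proof.
move=> n0 z; pose i0 := Ordinal n0.
exists (embr i0 (qe0 R)), (embr i0 (qemb z)).
by rewrite bq_emb row_embr eqxx qb_e0.
Qed.

Lemma bq_bDl u v : v != 0 -> (forall w, bracket_qheis v w = 0 -> bracket_qheis u w = 0) ->
  exists t, u = t *: v.
Proof.
move=> v0 H.
have S1 a : qb (row a u) (row a v) = 0.
  by rewrite -bq_emb; apply: H; rewrite bq_emb; apply: xNx; exact: qb_skew.
have S2 a : row a v = 0 -> row a u = 0.
  move=> ra; apply: qb_zero; rewrite -bq_emb; apply: H; by rewrite bq_emb ra qb0l.
pose t a := (qmulF (qconjF (row a u)) (row a v)) 0 (inord 0) / qnrm (row a v).
have S3 a : row a v != 0 -> row a u = t a *: row a v.
  by move=> ra; exact: (qpar ra (S1 a)).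
have Nz a : row a v != 0 -> qnrm (row a v) != 0.
  by move=> ra; apply/negP => /eqP /qnrm_eq0 /eqP; apply/negP.
have S4 a c : row a v != 0 -> row c v != 0 -> t a = t c.
  move=> ra rc.
  pose w := embr a (qnrm (row c v) *: qmulF (row a v) (qe1 R))
          + embr c ((- qnrm (row a v)) *: qmulF (row c v) (qe1 R)).
  have hv : bracket_qheis v w = 0.
    rewrite bq_addr !bq_emb !qbZr !qb_self !scalerA -scalerDl.
    by rewrite (_ : _ + _ = 0) ?scale0r //; ring.
  have hu := H w hv.
  rewrite bq_addr !bq_emb !qbZr (S3 a ra) (S3 c rc) !qbZl !qb_self !scalerA -scalerDl in hu.
  have h0 : (((qnrm (row c v) * t a * qnrm (row a v) + - qnrm (row a v) * t c * qnrm (row c v)))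
     *: e3 R) 0 (inord 0) = 0 by rewrite hu co0.
  rewrite coZ e3_0 mulr1 in h0.
  have := Nz a ra; have := Nz c rc; move: h0.
  set Na := qnrm (row a v); set Nc := qnrm (row c v) => h0 hc ha.
  have : (t a - t c) * (Na * Nc) = 0 by rewrite -h0; ring.
  move/eqP; rewrite mulf_eq0 mulf_eq0 (negbTE ha) (negbTE hc) !orbF subr_eq0 => /eqP.
  done.
have [a0 ra0] := row_nz v0.
exists (t a0); apply/row_matrixP => a; rewrite rowZ'.
have [ra|ra] := eqVneq (row a v) 0.
  by rewrite (S2 a ra) ra scaler0.
by rewrite (S3 a ra) (S4 a a0 ra ra0).
Qed.

Lemma qheis_ok : (0 < n)%N -> aut_central_times_lie (@mul_qheis R n) (@inv_qheis R n).
Proof.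
move=> n0; apply: (generic (@bq_bl) (@bq_skew)).
- exact: bq_bnd.
- exact: bq_bDl.
- exact: bq_bs.
Qed.
End QH.

Lemma abelian_ok (R : realType) n : aut_central_times_lie (@mul_abelian R n) (@inv_abelian R n).
Proof.
move=> F hF; exists F, id; split; [split=> // x y | split].
- rewrite /mul_abelian /nil2_mul /bracket_abelian /= !scaler0 !addr0.
  by congr (_, _); rewrite addrC.
- split; last by move=> x; exact: cvg_id.
  by split=> //; exists id.
- by [].
Qed.

Unset Implicit Arguments.

Theorem theoremC (R : realType) :
  (forall n : nat, (0 < n)%N ->
     aut_central_times_lie
       (@mul_abelian R n) (@inv_abelian R n)) /\
  (forall n : nat, (0 < n)%N ->
     aut_central_times_lie (T := ('M[R]_(n, 2) * 'rV[R]_1)%type)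
       (@mul_heis R n) (@inv_heis R n)) /\
  (forall n : nat, (0 < n)%N ->
     aut_central_times_lie (T := ('M[R]_(n, 4) * 'rV[R]_3)%type)
       (@mul_qheis R n) (@inv_qheis R n)) /\
  aut_central_times_lie
     (@mul_oheis R) (@inv_oheis R).
Proof.
split; [|split; [|split]].
- by move=> n _; exact: abelian_ok.
- by move=> n n0; exact: heis_ok.
- by move=> n n0; exact: qheis_ok.
- exact: oheis_ok.
Qed.
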